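(* Let $(X,d)$ be a finite metric space, $S\subseteq X$, $\tau\ge0$, and $L\ge 2$, and assume there exists a $1$-Lipschitz map $\varphi:X\to L_2$ satisfying $\|\varphi(x)-\varphi(y)\|_2\ge \tau/L$ for all $x,y\in S$ with $d(x,y)\in[\tau/2,3\tau]$. Then there is a $1$-Lipschitz map $h:X\to L_2$ with $$\|h(x)-h(y)\|_2\ge\frac{\tau}{9L}$$ whenever $x,y\in X$, $d(x,S)\le \frac{\tau}{6L}$, and $d(x,y)\in[\tau,2\tau]$.
   Context: $L_2$ denotes a Hilbert space; $d(x,S)=\min_{s\in S}d(x,s)$. *)

(* Defs.v *)
From HB Require Import structures.
From mathcomp Require Import all_boot all_order all_algebra.
From mathcomp Require Import reals.
Set Implicit Arguments. Unset Strict Implicit. Unset Printing Implicit Defensive.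
Import Order.TTheory GRing.Theory Num.Theory.
Local Open Scope ring_scope.

Definition is_metric (R : realType) (X : Type) (d : X -> X -> R) : Prop :=
  (forall x y, 0 <= d x y) /\
  (forall x y, d x y = 0 <-> x = y) /\
  (forall x y, d x y = d y x) /\
  (forall x y z, d x z <= d x y + d y z).

Definition enorm (R : realType) (n : nat) (v : 'rV[R]_n) : R :=
  Num.sqrt (\sum_(i < n) v ord0 i ^+ 2).

Definition lip1 (R : realType) (X : Type) (d : X -> X -> R) (n : nat)
  (f : X -> 'rV[R]_n) : Prop :=
  forall x y, enorm (f x - f y) <= d x y.

(* Main.v *)
Require Import Defs.
From HB Require Import structures.
From mathcomp Require Import all_boot all_order all_algebra.
From mathcomp Require Import reals ring lra.
Import Order.TTheory GRing.Theory Num.Theory.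
Local Open Scope ring_scope.

Section H.
Set Implicit Arguments. Unset Strict Implicit.
Variable R : realType.

Definition ss (n : nat) (v : 'rV[R]_n) : R := \sum_(i < n) v ord0 i ^+ 2.

Lemma ss_ge0 n (v : 'rV[R]_n) : 0 <= ss v.
Proof. by apply: sumr_ge0 => i _; rewrite sqr_ge0. Qed.

Lemma enormE n (v : 'rV[R]_n) : enorm v = Num.sqrt (ss v).
Proof. by []. Qed.

Lemma sqrt_geP (c a : R) : 0 <= c -> c ^+ 2 <= a -> c <= Num.sqrt a.
Proof.
move=> c0 h; have a0 : 0 <= a by apply: le_trans h; rewrite sqr_ge0.
by rewrite -(ger0_norm c0) -sqrtr_sqr ler_sqrt.
Qed.

Lemma sqrt_leP (c a : R) : 0 <= c -> a <= c ^+ 2 -> Num.sqrt a <= c.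
Proof.
move=> c0 h; rewrite -(ger0_norm c0) -sqrtr_sqr.
have [a0|a0] := leP 0 a; first by rewrite ler_sqrt // sqr_ge0.
by rewrite ltr0_sqrtr // sqrtr_ge0.
Qed.

Lemma sqrt_sq_le (c a : R) : 0 <= c -> 0 <= a -> c <= Num.sqrt a -> c ^+ 2 <= a.
Proof.
move=> c0 a0 h; rewrite -(sqr_sqrtr a0).
by rewrite lerXn2r // ?nnegrE ?sqrtr_ge0.
Qed.

Lemma cs n (u v : 'rV[R]_n) :
  (\sum_i u ord0 i * v ord0 i) ^+ 2 <= ss u * ss v.
Proof.
set C := \sum_i _.
have E : \sum_(i < n) \sum_(j < n) (u ord0 i * v ord0 j - u ord0 j * v ord0 i) ^+ 2
   = 2 * (ss u * ss v - C ^+ 2).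
  have E1 : forall i j : 'I_n, (u ord0 i * v ord0 j - u ord0 j * v ord0 i) ^+ 2 =
     (u ord0 i ^+ 2 * v ord0 j ^+ 2 + v ord0 i ^+ 2 * u ord0 j ^+ 2)
     - 2 * ((u ord0 i * v ord0 i) * (u ord0 j * v ord0 j)).
    by move=> i j; ring.
  under eq_bigr do under eq_bigr do rewrite E1.
  under eq_bigr do rewrite sumrB big_split /=.
  rewrite sumrB big_split /=.
  rewrite /ss /C expr2 !mulr_suml.
  under [X in X + _ - _ = _]eq_bigr do rewrite -mulr_sumr.
  under [X in _ + X - _ = _]eq_bigr do rewrite -mulr_sumr.
  under [X in _ - X = _]eq_bigr do rewrite -mulr_sumr -mulr_sumr.
  rewrite -!mulr_suml -mulr_sumr; rewrite -mulr_suml; ring.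
have : 0 <= 2 * (ss u * ss v - C ^+ 2).
  by rewrite -E; apply: sumr_ge0 => i _; apply: sumr_ge0 => j _; rewrite sqr_ge0.
lra.
Qed.

Lemma ss_add n (a b : 'rV[R]_n) :
  ss (a + b) = ss a + ss b + 2 * \sum_i a ord0 i * b ord0 i.
Proof.
rewrite /ss mulr_sumr -!big_split /=; apply: eq_bigr => i _; rewrite !mxE; ring.
Qed.

Lemma enorm_tri n (a b : 'rV[R]_n) : enorm (a + b) <= enorm a + enorm b.
Proof.
rewrite !enormE; set C := \sum_(i < n) a ord0 i * b ord0 i.
have hC : C <= Num.sqrt (ss a) * Num.sqrt (ss b).
  have [c0|c0] := leP C 0.
    by apply: le_trans c0 _; rewrite mulr_ge0 // sqrtr_ge0.
  rewrite -sqrtrM ?ss_ge0 //; apply: sqrt_geP; [exact: ltW| exact: cs].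
apply: sqrt_leP; first by rewrite addr_ge0 // sqrtr_ge0.
rewrite ss_add -/C sqrrD !sqr_sqrtr ?ss_ge0 // -mulr_natl; lra.
Qed.

Lemma enormN n (a : 'rV[R]_n) : enorm (- a) = enorm a.
Proof. by rewrite !enormE /ss; congr Num.sqrt; apply: eq_bigr => i _; rewrite mxE sqrrN. Qed.

Lemma enormB n (a b : 'rV[R]_n) : enorm (a - b) = enorm (b - a).
Proof. by rewrite -enormN opprB. Qed.

Lemma min_lip (u u' A B e : R) : `|u - u'| <= e -> `|A - B| <= e ->
  `|Num.min u A - Num.min u' B| <= e.
Proof.
rewrite !ler_norml => /andP[h1 h2] /andP[h3 h4].
have [k1|k1] := leP u A; have [k2|k2] := leP u' B;
  rewrite ?(min_l k1) ?(min_l k2) ?(min_r (ltW k1)) ?(min_r (ltW k2));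
  apply/andP; split; lra.
Qed.

Variables (X : finType) (d : X -> X -> R) (a : R).
Definition G (l : seq X) (x : X) : R := foldr (fun s acc => Num.min (d x s) acc) a l.

Lemma G_lip l x y : (forall s, `|d x s - d y s| <= d x y) -> `|G l x - G l y| <= d x y.
Proof.
move=> hd; elim: l => [|s l IH] /=.
  by rewrite subrr normr0; apply: le_trans (hd x); rewrite normr_ge0.
exact: min_lip.
Qed.

Lemma G_up l x s : s \in l -> G l x <= d x s.
Proof.
elim: l => [|t l IH] //=; rewrite in_cons => /orP[/eqP->|/IH h].
  by rewrite ge_min lexx.
by rewrite ge_min h orbT.
Qed.

Lemma G_low l x : (forall s, s \in l -> a <= d x s) -> a <= G l x.
Proof.
elim: l => [|t l IH] h //=; rewrite le_min h ?mem_head // IH // => s hs.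
by apply: h; rewrite in_cons hs orbT.
Qed.

Lemma sqrt_le_sq (c w : R) : 0 <= w -> Num.sqrt w <= c -> w <= c ^+ 2.
Proof.
move=> a0 h; rewrite -(sqr_sqrtr a0).
by rewrite lerXn2r // ?nnegrE ?sqrtr_ge0 //; apply: le_trans h; rewrite sqrtr_ge0.
Qed.

Lemma ss_h n (u u' : 'rV[R]_n) (c c' : R) :
  ss ((2^-1) *: row_mx u (const_mx c : 'rV_1) - (2^-1) *: row_mx u' (const_mx c'))
  = (ss (u - u') + (c - c')^+2) / 4.
Proof.
rewrite -scalerBr opp_row_mx add_row_mx /ss big_split_ord /= big_ord1.
under eq_bigr do rewrite mxE row_mxEl.
rewrite mxE row_mxEr !mxE.
under eq_bigr do rewrite exprMn.
rewrite -mulr_sumr.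
have -> : \sum_(i < n) (u - u') ord0 i ^+ 2 = \sum_(i < n) (u ord0 i - u' ord0 i) ^+ 2.
  by apply: eq_bigr => i _; rewrite !mxE.
by field.
Qed.

End H.
Unset Implicit Arguments. Set Strict Implicit.

Theorem lemma4p2 (R : realType) (X : finType) (d : X -> X -> R)
  (S : {set X}) (tau L : R) :
  is_metric d -> 0 <= tau -> 2 <= L ->
  (exists (n : nat) (phi : X -> 'rV[R]_n), lip1 d phi /\
     forall x y, x \in S -> y \in S -> tau / 2 <= d x y <= 3 * tau ->
       tau / L <= enorm (phi x - phi y)) ->
  exists (m : nat) (h : X -> 'rV[R]_m), lip1 d h /\
     forall x y, (exists2 s, s \in S & d x s <= tau / (6 * L)) ->
       tau <= d x y <= 2 * tau ->
       tau / (9 * L) <= enorm (h x - h y).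
Proof.
move=> [d0 [dxx [dsym dtri]]] t0 L2 [n [phi [phil phiS]]].
have L0 : 0 < L by lra.
set k := tau / (3 * L).
have k0 : 0 <= k by rewrite /k divr_ge0 //; lra.
have ek : tau = 3 * k * L by rewrite /k; field; lra.
have e1 : tau / L = 3 * k by rewrite ek; field; lra.
have e2 : tau / (6 * L) = k / 2 by rewrite ek; field; lra.
have e3 : tau / (9 * L) = k / 3 by rewrite ek; field; lra.
have k6 : 6 * k <= tau by rewrite ek; nra.
pose g := G d (3 * k / 2) (enum S).
exists (n + 1)%N, (fun x => (2^-1) *: row_mx (phi x) (const_mx (g x) : 'rV_1)).
split.
  move=> x y; rewrite enormE ss_h; apply: sqrt_leP; first exact: d0.
  have h1 : ss (phi x - phi y) <= d x y ^+ 2 by apply: sqrt_le_sq; [exact: ss_ge0| exact: phil].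
  have h2 : `|g x - g y| <= d x y.
    apply: G_lip => s; rewrite ler_norml; apply/andP; split;
      have := dtri x y s; have := dtri y x s; rewrite (dsym y x); lra.
  have h3 : (g x - g y) ^+ 2 <= d x y ^+ 2.
    by rewrite -real_normK ?num_real // lerXn2r // ?nnegrE ?normr_ge0 // (le_trans _ h2).
  have := d0 x y; nra.
move=> x y [s sS hxs] /andP[dl du].
rewrite e3 enormE ss_h; apply: sqrt_geP; first lra.
have gx : g x <= k / 2.
  by apply: le_trans (G_up _ _ _ _) _; [rewrite mem_enum; exact: sS | rewrite -e2].
have q0 := sqr_ge0 (g x - g y).
have p0 := ss_ge0 (phi x - phi y).
case: (boolP [exists s', (s' \in S) && (d y s' <= 3 * k / 2)]).
  move=> /existsP[s' /andP[s'S hys']].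
  have dss1 := dtri x s y; have dss2 := dtri s s' y; have dss3 := dtri s x y.
  have dss4 := dtri x y s'.
  rewrite (dsym s x) in dss3. rewrite (dsym s' y) in dss2.
  have u1 := dtri s x s'; rewrite (dsym s x) in u1.
  have hxs' : d x s <= k / 2 by rewrite -e2.
  have hp := phiS s s' sS s'S.
  have hp' : tau / L <= enorm (phi s - phi s').
    apply: hp; apply/andP; split.
      lra.
    lra.
  rewrite e1 in hp'.
  have eqv : phi s - phi s' = (phi s - phi x) + ((phi x - phi y) + (phi y - phi s')).
    by rewrite !addrA !subrK.
  have t1 := enorm_tri (phi s - phi x) ((phi x - phi y) + (phi y - phi s')).
  have t2 := enorm_tri (phi x - phi y) (phi y - phi s').
  have n1 : enorm (phi s - phi x) <= k / 2 by rewrite enormB; apply: le_trans (phil x s) _.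
  have n2 : enorm (phi y - phi s') <= 3 * k / 2 by apply: le_trans (phil y s') _.
  rewrite -eqv in t1.
  have hk : k <= enorm (phi x - phi y) by lra.
  have := sqrt_sq_le k0 p0 hk; nra.
move=> /existsPn hno.
have gy : 3 * k / 2 <= g y.
  apply: G_low => s'; rewrite mem_enum => s'S.
  by have := hno s'; rewrite s'S /= -ltNge => /ltW.
have : k <= g y - g x by lra.
nra.
Qed.
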